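(* Fix $k\in\mathbb{N}$, $q\in(0,1)$, $s=q^{-1/2}$ and $u>s$. Let $\lambda\in\mathsf{Sign}_k^+$ with $\lambda_1>\lambda_2>\dots>\lambda_k$. If $\pi\in\mathcal{P}_{\lambda/\varnothing}$ is typical, then $$\mathcal{W}(\pi)=\left(\frac{1-q}{1-su}\right)^{\binom{k+1}{2}}\left(\frac{(1-q^{-1})u}{1-su}\right)^{\binom{k}{2}}\left(\frac{u-s}{1-su}\right)^{|\lambda|-\binom{k}{2}},$$ where $|\lambda|=\lambda_1+\dots+\lambda_k$.
   Context: $\mathsf{Sign}_k^+$ is the set of $\lambda=(\lambda_1\ge\dots\ge\lambda_k)$ with $\lambda_i\in\mathbb{Z}_{\ge0}$. A vertex has type $(i_1,j_1;i_2,j_2)$ if $i_1$ (resp. $j_1$) paths enter from below (resp. the left) and $i_2$ (resp. $j_2$) leave upward (resp. right). Weights with spectral parameter $z$ ($g\in\mathbb{Z}_{\ge0}$; all other types weight $0$): $w_z(g,0;g,0)=\frac{1-sq^gz}{1-sz}$, $w_z(g+1,0;g,1)=\frac{(1-s^2q^g)z}{1-sz}$, $w_z(g,1;g,1)=\frac{z-sq^g}{1-sz}$, $w_z(g,1;g+1,0)=\frac{1-q^{g+1}}{1-sz}$. For $\lambda\in\mathsf{Sign}_k^+$, $\mathcal{P}_{\lambda/\varnothing}$ is the set of collections of up-right paths in $\mathbb{Z}_{\ge0}\times\{1,\dots,k\}$ with at most one path per horizontal edge (vertical edges may carry several), one path entering through $(-1,y)\to(0,y)$ for each $y=1,\dots,k$,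 none entering from the bottom, and paths exiting at the top through $(\lambda_i,k)\to(\lambda_i,k+1)$, $i=1,\dots,k$. For such $\pi$, $\mathcal{W}(\pi)=\prod_{(x,y)}w_u(\text{type of }(x,y))$. A path collection $\pi\in\mathcal{P}_{\lambda/\varnothing}$ (with $\lambda$ strictly decreasing) is typical if every vertex of $\pi$ has one of the types $(0,0;0,0)$, $(0,1;0,1)$, $(0,1;1,0)$, $(1,0;0,1)$. *)

(* Defs.v *)
From HB Require Import structures.
From mathcomp Require Import all_boot all_order all_algebra.
From mathcomp Require Import reals.
Set Implicit Arguments. Unset Strict Implicit. Unset Printing Implicit Defensive.
Import Order.TTheory GRing.Theory Num.Theory.
Local Open Scope ring_scope.

(* A path collection in Z_{>=0} x {1..k} is encoded by its edge occupations:
   V x y = number of paths on the vertical edge (x,y) -> (x,y+1)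
           (y = 0 : edge entering (x,1) from the bottom; y = k : exit at top),
   H x y = number of paths on the horizontal edge (x-1,y) -> (x,y)
           (x = 0 : the edge (-1,y) -> (0,y) entering from the left). *)

Definition vtype (V H : nat -> nat -> nat) (x y : nat) : nat * nat * nat * nat :=
  (V x y.-1, H x y, V x y, H x.+1 y).

Definition in_P (k : nat) (lam : k.-tuple nat) (V H : nat -> nat -> nat) : Prop :=
  [/\ (forall x y, (1 <= y <= k)%N -> (H x y <= 1)%N),
      (forall y, (1 <= y <= k)%N -> H 0%N y = 1%N),
      (forall x, V x 0%N = 0%N),
      (forall x y, (1 <= y <= k)%N -> (V x y.-1 + H x y = V x y + H x.+1 y)%N)
    & (forall x, V x k = count_mem x lam)].

Definition sparam (R : realType) (q : R) : R := (Num.sqrt q)^-1.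

Definition wz (R : realType) (q z : R) (t : nat * nat * nat * nat) : R :=
  let s := sparam q in
  let: (i1, j1, i2, j2) := t in
  if (j1 == 0%N) && (j2 == 0%N) && (i1 == i2) then
    (1 - s * q ^+ i1 * z) / (1 - s * z)
  else if (j1 == 0%N) && (j2 == 1%N) && (i1 == i2.+1) then
    (1 - s ^+ 2 * q ^+ i2) * z / (1 - s * z)
  else if (j1 == 1%N) && (j2 == 1%N) && (i1 == i2) then
    (z - s * q ^+ i1) / (1 - s * z)
  else if (j1 == 1%N) && (j2 == 0%N) && (i2 == i1.+1) then
    (1 - q ^+ i1.+1) / (1 - s * z)
  else 0.

(* W(pi) = product of w_u over all vertices.  All vertices (x,y) with
   x > lambda_1 are of type (0,0;0,0) (weight 1) for any pi in P, so the
   product is taken over 0 <= x <= lambda_1, 1 <= y <= k. *)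
Definition Wt (R : realType) (q u : R) (k : nat) (lam : k.-tuple nat)
    (V H : nat -> nat -> nat) : R :=
  \prod_(x < (\max_(i < k) tnth lam i).+1)
    \prod_(1 <= y < k.+1) wz q u (vtype V H x y).

Definition typical (k : nat) (V H : nat -> nat -> nat) : Prop :=
  forall x y, (1 <= y <= k)%N ->
    vtype V H x y \in [:: (0,0,0,0); (0,1,0,1); (0,1,1,0); (1,0,0,1)]%N.

(* Main.v *)
Require Import Defs.
From HB Require Import structures.
From mathcomp Require Import all_boot all_order all_algebra.
From mathcomp Require Import reals.
From mathcomp Require Import zify ring lra.
Import Order.TTheory GRing.Theory Num.Theory.
Local Open Scope ring_scope.

Lemma s_facts (R : realType) (q u : R) :
  0 < q -> q < 1 -> sparam q < u ->
  sparam q ^+ 2 = q^-1 /\ 1 - sparam q * u != 0.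
Proof.
move=> q0 q1 su.
have sp : 0 < sparam q by rewrite /sparam invr_gt0 sqrtr_gt0.
have s2 : sparam q ^+ 2 = q^-1 by rewrite /sparam exprVn sqr_sqrtr // ltW.
split=> //.
have : 1 < sparam q * u.
  have h1 : 1 < q^-1 by rewrite invf_gt1.
  have h2 : sparam q * sparam q < sparam q * u by rewrite ltr_pM2l.
  by apply: lt_trans h2; rewrite -expr2 s2.
move=> h; rewrite subr_eq0; apply/eqP => e; move: h; by rewrite -e ltxx.
Qed.

Lemma vertexP (R : realType) (q u : R) a b c d :
  0 < q -> q < 1 -> sparam q < u ->
  (a, b, c, d) \in [:: (0,0,0,0); (0,1,0,1); (0,1,1,0); (1,0,0,1)]%N ->
  wz q u (a, b, c, d) =
    ((1 - q) / (1 - sparam q * u)) ^+ c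
    * ((1 - q^-1) * u / (1 - sparam q * u)) ^+ a
    * ((u - sparam q) / (1 - sparam q * u)) ^+ (d - a)%N
  /\ (a <= d)%N.
Proof.
move=> q0 q1 su; have [s2 nz] := s_facts _ _ _ q0 q1 su.
rewrite !inE => /or4P [] /eqP [-> -> -> ->]; split => //; rewrite /wz /=.
- by rewrite expr0 mulr1 divff // !mul1r.
all: by rewrite ?subnn ?subn0 ?expr0 ?expr1 ?s2 ?mulr1 ?mul1r ?divff.
Qed.

Lemma count_sums (N : nat) (s : seq nat) : all (fun v => v < N)%N s ->
  (\sum_(0 <= x < N) count_mem x s = size s)%N /\
  (\sum_(0 <= x < N) x * count_mem x s = \sum_(v <- s) v)%N.
Proof.
elim: s => [|a s IH] /=.
  by move=> _; rewrite big_nil; split; apply: big1 => x _ //; rewrite muln0.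
move=> /andP [aN /IH [h1 h2]].
have ain : a \in index_iota 0 N by rewrite mem_index_iota.
have u : uniq (index_iota 0 N) by apply: iota_uniq.
split.
  rewrite big_split /= h1 (bigD1_seq a) //= eqxx big1 ?addn0 // => i /negbTE.
  by rewrite eq_sym => ->.
rewrite big_cons -h2; under eq_bigr do rewrite mulnDr.
rewrite big_split /= (bigD1_seq a) //= eqxx muln1 big1 ?addn0 // => i /negbTE.
by rewrite eq_sym => ->; rewrite muln0.
Qed.

Lemma gauss1 k : (\sum_(1 <= y < k.+1) y = 'C(k.+1, 2))%N.
Proof.
elim: k => [|k IH]; first by rewrite big_geq.
by rewrite big_nat_recr //= IH [in RHS]binS bin1 addnC.
Qed.

Lemma gauss0 k : (\sum_(1 <= y < k.+1) y.-1 = 'C(k, 2))%N.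
Proof.
elim: k => [|k IH]; first by rewrite big_geq.
by rewrite big_nat_recr //= IH [in RHS]binS bin1 addnC.
Qed.

Theorem lemma3p7 (R : realType) (k : nat) (q u : R) (lam : k.-tuple nat)
    (V H : nat -> nat -> nat) :
  0 < q -> q < 1 -> sparam q < u ->
  (forall i j : 'I_k, (i < j)%N -> (tnth lam j < tnth lam i)%N) ->
  in_P lam V H -> typical k V H ->
  let s := sparam q in
  Wt q u lam V H =
    ((1 - q) / (1 - s * u)) ^+ 'C(k.+1, 2)
    * ((1 - q^-1) * u / (1 - s * u)) ^+ 'C(k, 2)
    * ((u - s) / (1 - s * u)) ^+ ((\sum_(i < k) tnth lam i) - 'C(k, 2))%N.
Proof.
move=> q0 q1 su _ [H1 H0 V0 cons Vk] typ s.
rewrite /Wt; set N := (\max_(i < k) tnth lam i).+1.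
set A := (1 - q) / (1 - s * u).
set B := (1 - q^-1) * u / (1 - s * u).
set C := (u - s) / (1 - s * u).
have vx x y : (1 <= y < k.+1)%N ->
  wz q u (vtype V H x y) = A ^+ V x y * B ^+ V x y.-1 * C ^+ (H x.+1 y - V x y.-1)%N
  /\ (V x y.-1 <= H x.+1 y)%N.
  move=> hy; have := typ x y hy; rewrite /vtype => hm.
  exact: (vertexP _ _ _ _ _ _ _ q0 q1 su hm).
rewrite (eq_bigr (fun x : 'I_N => \prod_(1 <= y < k.+1)
   (A ^+ V x y * B ^+ V x y.-1 * C ^+ (H x.+1 y - V x y.-1)%N))); last first.
  move=> x _; apply: eq_big_nat => y hy; exact: (vx x y hy).1.
rewrite -(big_mkord xpredT (fun x => \prod_(1 <= y < k.+1)
   (A ^+ V x y * B ^+ V x y.-1 * C ^+ (H x.+1 y - V x y.-1)%N))).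
rewrite (eq_bigr (fun x => (\prod_(1 <= y < k.+1) A ^+ V x y) *
   (\prod_(1 <= y < k.+1) B ^+ V x y.-1) *
   (\prod_(1 <= y < k.+1) C ^+ (H x.+1 y - V x y.-1)%N))); last first.
  by move=> x _; rewrite !big_split.
rewrite !big_split /=.
under eq_bigr do rewrite prodrXr.
rewrite prodrXr.
under [X in _ * X * _]eq_bigr do rewrite prodrXr.
rewrite prodrXr.
under [X in _ * X]eq_bigr do rewrite prodrXr.
rewrite prodrXr.
pose Rw y := (\sum_(0 <= x < N) V x y)%N.
pose Pw y := (\sum_(0 <= x < N) x * V x y)%N.
pose Tw y := (\sum_(0 <= x < N) H x.+1 y)%N.
have E1 y : (1 <= y <= k)%N -> (Rw y.-1 + 1 = Rw y + H N y)%N.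
  move=> hy.
  have e : (\sum_(0 <= x < N) (V x y.-1 + H x y) = \sum_(0 <= x < N) (V x y + H x.+1 y))%N.
    by apply: eq_bigr => x _; apply: cons.
  rewrite !big_split /= in e.
  have t : (\sum_(0 <= x < N) H x y + H N y = H 0 y + Tw y)%N.
    by rewrite -big_nat_recr //= big_nat_recl.
  rewrite H0 // in t; rewrite /Rw /Tw in t *; lia.
have E2 y : (1 <= y <= k)%N -> (Pw y.-1 + Tw y = Pw y + N * H N y)%N.
  move=> hy.
  have e : (\sum_(0 <= x < N) x * V x y.-1 + \sum_(0 <= x < N) x * H x y =
     \sum_(0 <= x < N) x * V x y + \sum_(0 <= x < N) x * H x.+1 y)%N.
    by rewrite -!big_split; apply: eq_bigr => x _ /=; rewrite -!mulnDr cons.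
  have t : (\sum_(0 <= x < N) x * H x y + N * H N y = \sum_(0 <= x < N) x * H x.+1 y + Tw y)%N.
    rewrite -big_nat_recr //= big_nat_recl //= mul0n add0n /Tw -big_split /=.
    by apply: eq_bigr => x _; rewrite mulSn addnC.
  rewrite /Pw /Tw in t *; lia.
have allN : all (fun v => v < N)%N lam.
  by apply/all_tnthP => i; rewrite /N ltnS; exact: leq_bigmax.
have [cs1 cs2] := count_sums _ _ allN.
have Rk : Rw k = k.
  by rewrite /Rw; under eq_bigr do rewrite Vk; rewrite cs1 size_tuple.
have ind : forall j, (j <= k)%N -> (Rw j + \sum_(1 <= y < j.+1) H N y)%N = j.
  elim => [|j IH] hj.
    by rewrite big_geq // addn0 /Rw; apply: big1 => x _; exact: V0.
  rewrite big_nat_recr //=.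
  have := E1 j.+1; rewrite /= hj => /(_ isT).
  have := IH (ltnW hj); lia.
have HN y : (1 <= y <= k)%N -> H N y = 0%N.
  move=> hy; have := ind k (leqnn k); rewrite Rk => e.
  have /eqP : (\sum_(1 <= y < k.+1) H N y = 0)%N by lia.
  rewrite sum_nat_seq_eq0 => /allP /(_ y); rewrite mem_index_iota ltnS hy.
  by move=> /(_ isT) /eqP.
have Ry : forall j, (j <= k)%N -> Rw j = j.
  elim => [|j IH] hj.
    by rewrite /Rw; apply: big1 => x _; exact: V0.
  have := E1 j.+1; rewrite /= hj HN ?hj // => /(_ isT).
  have := IH (ltnW hj); lia.
have Py : forall j, (j <= k)%N -> Pw j = (\sum_(1 <= y < j.+1) Tw y)%N.
  elim => [|j IH] hj.
    by rewrite big_geq // /Pw; apply: big1 => x _; rewrite V0 muln0.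
  rewrite big_nat_recr //=.
  have := E2 j.+1; rewrite /= hj HN ?hj // => /(_ isT).
  have := IH (ltnW hj); lia.
have S2 : (\sum_(0 <= i < N) \sum_(1 <= i0 < k.+1) V i i0.-1)%N = 'C(k, 2).
  rewrite exchange_big /= -gauss0; apply: eq_big_nat => y /andP [y1 yk].
  by apply: Ry; rewrite ltnS in yk; case: y y1 yk => //= y _ /ltnW.
have S3 : (\sum_(0 <= i < N) \sum_(1 <= i0 < k.+1) (H i.+1 i0 - V i i0.-1)
   + \sum_(0 <= i < N) \sum_(1 <= i0 < k.+1) V i i0.-1)%N = (\sum_(i < k) tnth lam i)%N.
  rewrite -big_split /=.
  rewrite (eq_bigr (fun i => \sum_(1 <= i0 < k.+1) H i.+1 i0)); last first.
    move=> x _; rewrite -big_split /=; apply: eq_big_nat => y hy.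
    by rewrite subnK // (vx x y hy).2.
  rewrite exchange_big /= -(big_tuple 0%N addn lam xpredT (fun x => x)) -cs2.
  under [RHS]eq_bigr do rewrite -Vk.
  exact: (esym (Py k (leqnn k))).
congr (A ^+ _ * B ^+ _ * C ^+ _).
- rewrite exchange_big /= -gauss1; apply: eq_big_nat => y /andP [y1 yk].
  by apply: Ry; rewrite ltnS in yk.
- exact: S2.
- by rewrite -S3 S2 addnK.
Qed.
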